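(* Let $p,q$ be distinct primes, $n\geqslant1$, and let $S$ be a minimal generating set for a $C_{p^nq}$-transfer system. Then $|S|\leqslant 3k+1$ if $n=2k$, and $|S|\leqslant 3k+2$ if $n=2k+1$.
   Context: For a finite group $G$, an arrow is a pair $(H,K)$ of subgroups with $H\leqslant K$; identity arrows are those with $H=K$. A $G$-transfer system is a set of arrows containing all identities and closed under composition ($(H,K),(K,L)\Rightarrow(H,L)$), conjugation ($(H,K)\Rightarrow(gHg^{-1},gKg^{-1})$) and restriction ($(H,K)$ and $L\leqslant K\Rightarrow(H\cap L,L)$). For a set $S$ of non-identity arrows, $\langle S\rangle$ is the smallest transfer system containing $S$; $S$ is a minimal generating set of $\mathsf{T}$ if $\langle S\rangle=\mathsf{T}$ and $\langle S\setminus\{s\}\rangle\neq\mathsf{T}$ for all $s\in S$. *)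

(* Defs.v *)
From mathcomp Require Import all_boot all_fingroup.
Set Implicit Arguments. Unset Strict Implicit. Unset Printing Implicit Defensive.
Local Open Scope group_scope.

Section TransferSystems.
Variable gT : finGroupType.
Implicit Types (G : {group gT}) (A : {set gT}).

Definition arrow := ({set gT} * {set gT})%type.

Definition subgrp G A : bool := group_set A && (A \subset G).

Definition is_arrow G (a : arrow) : bool :=
  [&& subgrp G a.1, subgrp G a.2 & a.1 \subset a.2].

Definition is_identity (a : arrow) : bool := a.1 == a.2.

Definition transfer_system G (T : {set arrow}) : Prop :=
  [/\ (forall a, a \in T -> is_arrow G a),
      (forall H, subgrp G H -> (H, H) \in T),
      (forall H K L, (H, K) \in T -> (K, L) \in T -> (H, L) \in T),
      (forall H K g, (H, K) \in T -> g \in G -> (H :^ g, K :^ g) \in T) &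
      (forall H K L, (H, K) \in T -> subgrp G L -> L \subset K ->
                     (H :&: L, L) \in T)].

Definition generates G (S T : {set arrow}) : Prop :=
  [/\ transfer_system G T, S \subset T &
      forall T', transfer_system G T' -> S \subset T' -> T \subset T'].

Definition minimal_generating_set G (S T : {set arrow}) : Prop :=
  [/\ (forall a, a \in S -> is_arrow G a && ~~ is_identity a),
      generates G S T &
      forall s, s \in S -> ~ generates G (S :\ s) T].

End TransferSystems.

(* Main.v *)
Require Import Defs.
From mathcomp Require Import all_boot all_fingroup all_solvable.
From Stdlib Require Import Classical.
From mathcomp Require Import zify.
Set Implicit Arguments. Unset Strict Implicit. Unset Printing Implicit Defensive.

Definition pt := (nat * bool)%type.
Definition ple (x y : pt) := (x.1 <= y.1) && (x.2 ==> y.2).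
Definition pmeet (x y : pt) : pt := (minn x.1 y.1, x.2 && y.2).

Lemma inj_bound (T : eqType) (L : seq T) (f : T -> nat) m :
  uniq L -> {in L &, injective f} -> (forall s, s \in L -> f s < m) -> size L <= m.
Proof.
move=> uL injf ltm; rewrite -(size_map f) -(size_iota 0 m).
apply: uniq_leq_size; first by rewrite map_inj_in_uniq.
by move=> y /mapP[s sL ->]; rewrite mem_iota /= ltm.
Qed.

Lemma count3 (L : seq (pt * pt)) : all (fun s : pt * pt => s.1.2 ==> s.2.2) L ->
  count (fun s : pt * pt => s.2.2) L + count (fun s : pt * pt => s.1.2 || ~~ s.2.2) L
  + count (fun s : pt * pt => ~~ s.1.2) L = 2 * size L.
Proof.
elim: L => //= [[[a r] [c t]] L IH] /andP[/= h /IH].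
case: r t h => [] [] //= _; lia.
Qed.

Section CombS.
Variable n : nat.
Variable S : seq (pt * pt).
Variable R : (pt * pt) -> pt -> pt -> bool.
Hypothesis HSuniq : uniq S.
Hypothesis HSarr : forall s, s \in S -> [/\ s.2.1 <= n, ple s.1 s.2 & s.1 != s.2].
Hypothesis HRid : forall s x, s \in S -> x.1 <= n -> R s x x.
Hypothesis HRcomp : forall s x y z, s \in S -> R s x y -> R s y z -> R s x z.
Hypothesis HRres : forall s x y z, s \in S -> R s x y -> z.1 <= n -> ple z y ->
  R s (pmeet x z) z.
Hypothesis HRS : forall s t, s \in S -> t \in S -> t != s -> R s t.1 t.2.
Hypothesis HRn : forall s, s \in S -> ~~ R s s.1 s.2.

Lemma Gen s1 s2 : s1 \in S -> s2 \in S -> s1 != s2 -> ple s1.2 s2.2 ->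
  pmeet s2.1 s1.2 = s1.1 -> False.
Proof.
move=> S1 S2 ne le e.
have := HRres S1 (HRS S1 S2 _) _ le.
rewrite e => /(_ _ _) H.
move: (HRn S1); rewrite H //; last by case: (HSarr S1).
by rewrite eq_sym.
Qed.

Definition mx s r := \max_(v < n.+1 | R s s.1 (val v, r)) v.

Lemma mx_ub s r v : v <= n -> R s s.1 (v, r) -> v <= mx s r.
Proof.
move=> vn Rv; rewrite /mx.
have -> : v = val (Ordinal (n:=n.+1) (m:=v) vn) by [].
exact: (leq_bigmax_cond (Ordinal (n:=n.+1) (m:=v) vn)).
Qed.

Lemma mx_wit s r v : v <= n -> R s s.1 (v, r) -> R s s.1 (mx s r, r) /\ mx s r <= n.
Proof.
move=> vn Rv.
have : #|[pred i : 'I_n.+1 | R s s.1 (val i, r)]| > 0.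
  by apply/card_gt0P; exists (Ordinal (n:=n.+1) (m:=v) vn).
case/(eq_bigmax_cond (fun i : 'I_n.+1 => val i)) => i0 Hi0 E.
rewrite /mx E; split; first exact: Hi0.
by rewrite -ltnS ltn_ord.
Qed.


Lemma arrP a r c t : ((a, r), (c, t)) \in S ->
  [/\ c <= n, a <= c, r ==> t & (a != c) || (r != t)].
Proof.
case/HSarr=> /= cn /andP[/= ac rt] ne; split=> //.
by apply: contraR ne; rewrite negb_or !negbK => /andP[/eqP-> /eqP->].
Qed.

Lemma minnl a c : a <= c -> minn a c = a.
Proof. by move=> h; apply/minn_idPl. Qed.
Lemma minnr a c : c <= a -> minn a c = c.
Proof. by move=> h; apply/minn_idPr. Qed.

Lemma rho_bound a r c : ((a, r), (c, false)) \in S ->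
  let s := ((a, r), (c, false)) in
  [/\ r = false, a <= mx s false, mx s false < c &
      R s (a, false) (mx s false, false)].
Proof.
move=> Ss s; case/arrP: (Ss) => cn ac; rewrite implybF => /negPf r0 _.
subst r.
have Ra : R s (a, false) (a, false) by apply: HRid => //=; lia.
have [W Wn] := mx_wit (s:=s) (r:=false) (v:=a) (leq_trans ac cn) Ra.
split=> //; first exact: mx_ub (leq_trans ac cn) Ra.
rewrite ltnNge; apply/negP => cle.
have := HRres Ss W (z := (c, false)) cn.
rewrite /ple /= cle /pmeet /= minnl // => /(_ isT) H.
by move: (HRn Ss); rewrite H.
Qed.

Lemma rho_block a r c t : ((a, r), (c, false)) \in S -> t \in S ->
  t != ((a, r), (c, false)) ->
  t.1.1 = mx ((a, r), (c, false)) false -> t.1.1 < t.2.1 -> False.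
Proof.
move=> Ss St ne e lt.
have [r0 _ _ W] := rho_bound Ss; subst r.
set s := ((a, false), (c, false)) in W e ne Ss *.
case: (HSarr St) => tn _ _.
have := HRres Ss (HRS Ss St ne) (z := (t.1.1.+1, false)) (leq_trans lt tn).
rewrite /ple /= lt /pmeet /= minnl ?andbF ?leqnSn // => /(_ isT).
rewrite e => W2.
have bnd : (mx s false).+1 <= n by rewrite -e; exact: leq_trans lt tn.
by have := mx_ub bnd (HRcomp Ss W W2); rewrite ltnn.
Qed.

Lemma rho_inj s1 s2 : s1 \in S -> s2 \in S -> s1 != s2 ->
  s1.2.2 = false -> s2.2.2 = false -> s1.1.1 <= s2.1.1 ->
  mx s1 false = mx s2 false -> False.
Proof.
case: s1 => [[a1 r1] [c1 t1]]; case: s2 => [[a2 r2] [c2 t2]] /= S1 S2 ne t10 t20 le e.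
subst t1 t2.
have [r10 _ _ W1] := rho_bound S1; have [r20 h2 lt2 _] := rho_bound S2.
subst r1 r2.
have := HRres S1 W1 (z := (a2, false)) _.
rewrite /ple /= /pmeet /= minnl // e h2 => /(_ _ isT).
case/arrP: (S2) => c2n a2c2 _ _.
move=> /(_ (leq_trans a2c2 c2n)) W.
have := HRcomp S1 W (HRS S1 S2 _).
rewrite eq_sym => /(_ ne) /= W2.
have := mx_ub (leq_trans (leqnn c2) c2n) W2.
by rewrite e => h; move: lt2; rewrite ltnNge h.
Qed.

Definition hasBig (s : pt * pt) :=
  has (fun t : pt * pt => ~~ t.1.2 && t.2.2 && (s.1.1 < t.1.1)) S.

Lemma mu_base a c : ((a, false), (c, true)) \in S -> hasBig ((a, false), (c, true)) ->
  R ((a, false), (c, true)) (a, false) (a, true).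
Proof.
move=> Ss /hasP[[[a' r'] [c' t']] St /= /andP[/andP[r'0 t'1] lt]].
case: r' r'0 St => // _ St; case: t' t'1 St => // _ St.
have ne : ((a', false), (c', true)) != ((a, false), (c, true)).
  by apply/negP => /eqP [] e _; move: lt; rewrite e ltnn.
have := HRres Ss (HRS Ss St ne) (z := (a, true)).
case/arrP: (St) => c'n a'c' _ _.
rewrite /ple /pmeet /= minnr; last exact: ltnW.
apply; [lia | lia].
Qed.

Lemma mu_bound a c : ((a, false), (c, true)) \in S -> hasBig ((a, false), (c, true)) ->
  let s := ((a, false), (c, true)) in
  [/\ a <= mx s true, mx s true < c & R s (a, false) (mx s true, true)].
Proof.
move=> Ss hb s; have Ra := mu_base Ss hb.
case/arrP: (Ss) => cn ac _ _.
have [W Wn] := mx_wit (s:=s) (r:=true) (v:=a) (leq_trans ac cn) Ra.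
split=> //; first exact: mx_ub (leq_trans ac cn) Ra.
rewrite ltnNge; apply/negP => cle.
have := HRres Ss W (z := (c, true)) cn.
rewrite /ple /= cle /pmeet /= minnl // => /(_ isT) H.
by move: (HRn Ss); rewrite H.
Qed.

Lemma mu_block a c t : ((a, false), (c, true)) \in S -> hasBig ((a, false), (c, true)) ->
  t \in S -> t.1.2 = true -> t.1.1 = mx ((a, false), (c, true)) true -> False.
Proof.
case: t => [[b rb] [w rw]] /= Ss hb St rb1 e; subst rb.
have [_ _ W] := mu_bound Ss hb.
set s := ((a, false), (c, true)) in W e Ss *.
have ne : ((b, true), (w, rw)) != s by apply/eqP; case.
case/arrP: (St) => wn bw; rewrite implyTb => rw1; move: rw1 St ne => -> St ne.
rewrite eqxx orbF => bnw.
have lt : b < w by rewrite ltn_neqAle bnw bw.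
have := HRres Ss (HRS Ss St ne) (z := (b.+1, true)) (leq_trans lt wn).
rewrite /ple /= lt /pmeet /= minnl ?leqnSn // => /(_ isT).
rewrite e => W2.
have bnd : (mx s true).+1 <= n by rewrite -e; exact: leq_trans lt wn.
by have := mx_ub bnd (HRcomp Ss W W2); rewrite ltnn.
Qed.

Lemma mu_inj a1 c1 a2 c2 :
  let s1 := ((a1, false), (c1, true)) in let s2 := ((a2, false), (c2, true)) in
  s1 \in S -> s2 \in S -> s1 != s2 -> hasBig s1 -> hasBig s2 -> a1 <= a2 ->
  mx s1 true = mx s2 true -> False.
Proof.
move=> s1 s2 S1 S2 ne hb1 hb2 le e.
have [_ _ W1] := mu_bound S1 hb1; have [h2 lt2 _] := mu_bound S2 hb2.
case/arrP: (S2) => c2n a2c2 _ _.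
have := HRres S1 W1 (z := (a2, false)) (leq_trans a2c2 c2n).
rewrite /ple /= /pmeet /= minnl // e h2 => /(_ isT) W.
have := HRcomp S1 W (HRS S1 S2 _).
rewrite eq_sym => /(_ ne) /= W2.
have := mx_ub c2n W2.
by rewrite e => h; move: lt2; rewrite ltnNge h.
Qed.

Lemma UU_same a c1 c2 : ((a, true), (c1, true)) \in S -> ((a, true), (c2, true)) \in S ->
  ((a, true), (c1, true)) != ((a, true), (c2, true)) -> False.
Proof.
wlog le : c1 c2 / c1 <= c2.
  move=> W S1 S2 ne; case: (leqP c1 c2) => h; first exact: W h S1 S2 ne.
  by apply: (W c2 c1 (ltnW h) S2 S1); rewrite eq_sym.
move=> S1 S2 ne; apply: (Gen S1 S2 ne); first by rewrite /ple /= le.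
case/arrP: S1 => _ ac1 _ _; by rewrite /pmeet /= minnl.
Qed.

Lemma BU_same a c1 c2 : ((a, false), (c1, true)) \in S -> ((a, false), (c2, true)) \in S ->
  ((a, false), (c1, true)) != ((a, false), (c2, true)) -> False.
Proof.
wlog le : c1 c2 / c1 <= c2.
  move=> W S1 S2 ne; case: (leqP c1 c2) => h; first exact: W h S1 S2 ne.
  by apply: (W c2 c1 (ltnW h) S2 S1); rewrite eq_sym.
move=> S1 S2 ne; apply: (Gen S1 S2 ne); first by rewrite /ple /= le.
case/arrP: S1 => _ ac1 _ _; by rewrite /pmeet /= minnl.
Qed.

Lemma Vert a1 a2 c2 : ((a1, false), (a1, true)) \in S -> ((a2, false), (c2, true)) \in S ->
  a1 < a2 -> False.
Proof.
move=> S1 S2 lt.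
have ne : ((a1, false), (a1, true)) != ((a2, false), (c2, true)).
  by apply/eqP => -[e _]; move: lt; rewrite e ltnn.
case/arrP: (S2) => _ a2c2 _ _.
apply: (Gen S1 S2 ne); first by rewrite /ple /=; lia.
by rewrite /pmeet /= minnr //; apply: ltnW.
Qed.

Lemma src_lt a r c t : ((a, r), (c, t)) \in S -> r = t -> a < c.
Proof.
case/arrP=> _ ac _; move=> + e; subst t; rewrite eqxx orbF => ne.
by rewrite ltn_neqAle ne ac.
Qed.

Lemma rt_true a c t : ((a, true), (c, t)) \in S -> t = true.
Proof. by case/arrP=> _ _; case: t. Qed.

Definition fa (s : pt * pt) := if s.1.2 then s.1.1 else if hasBig s then mx s true else n.
Definition fb (s : pt * pt) := if s.1.2 then s.1.1 else mx s false.
Definition fc (s : pt * pt) :=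
  if s.2.2 then (if s.1.1 == s.2.1 then n else s.1.1) else mx s false.

Lemma inj_a s1 s2 : s1 \in S -> s2 \in S -> s1.2.2 -> s2.2.2 -> s1 != s2 ->
  s1.1.1 <= s2.1.1 -> fa s1 = fa s2 -> False.
Proof.
case: s1 => [[a1 r1] [c1 t1]]; case: s2 => [[a2 r2] [c2 t2]] /= S1 S2 T1 T2.
case: t1 T1 S1 => // _ S1; case: t2 T2 S2 => // _ S2 ne le.
have c1n : c1 <= n by case/arrP: (S1).
have c2n : c2 <= n by case/arrP: (S2).
case: r1 S1 ne => S1 ne; case: r2 S2 ne => S2 ne; rewrite /fa /=.
- by move=> e; subst a2; exact: UU_same S1 S2 ne.
- case hb: (hasBig _) => e.
    by apply: (mu_block S2 hb S1) => //.
  by have := src_lt S1 erefl; lia.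
- case hb: (hasBig _) => e.
    by apply: (mu_block S1 hb S2) => //.
  by have := src_lt S2 erefl; lia.
- case hb1: (hasBig ((a1, false), (c1, true)));
  case hb2: (hasBig ((a2, false), (c2, true))) => e.
  + exact: (mu_inj S1 S2 ne hb1 hb2 le e).
  + by have [_ + _] := mu_bound S1 hb1; rewrite e; lia.
  + by have [_ + _] := mu_bound S2 hb2; rewrite -e; lia.
  + move: le; rewrite leq_eqVlt => /orP[/eqP ea|lt].
      by subst a2; exact: BU_same S1 S2 ne.
    move: hb1 => /negP; apply; apply/hasP; exists ((a2, false), (c2, true)) => //=.
Qed.

Lemma inj_b s1 s2 : s1 \in S -> s2 \in S -> s1.1.2 || ~~ s1.2.2 -> s2.1.2 || ~~ s2.2.2 ->
  s1 != s2 -> s1.1.1 <= s2.1.1 -> fb s1 = fb s2 -> False.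
Proof.
case: s1 => [[a1 r1] [c1 t1]]; case: s2 => [[a2 r2] [c2 t2]] /= S1 S2 T1 T2 ne le.
case: r1 T1 S1 ne => /= T1 S1 ne; case: r2 T2 S2 ne => /= T2 S2 ne; rewrite /fb /=.
- move: (rt_true S1) (rt_true S2) => ? ?; subst t1 t2.
  by move=> e; subst a2; exact: UU_same S1 S2 ne.
- case: t2 T2 S2 ne => // _ S2 ne e.
  apply: (rho_block S2 S1) => //=.
  move: (rt_true S1) => ?; subst t1.
  exact: src_lt S1 erefl.
- case: t1 T1 S1 ne => // _ S1 ne e.
  apply: (rho_block S1 S2) => //=; first by rewrite eq_sym.
  move: (rt_true S2) => ?; subst t2.
  exact: src_lt S2 erefl.
- case: t1 T1 S1 ne => // _ S1 ne; case: t2 T2 S2 ne => // _ S2 ne e.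
  exact: (rho_inj S1 S2 ne erefl erefl le e).
Qed.

Lemma inj_c s1 s2 : s1 \in S -> s2 \in S -> ~~ s1.1.2 -> ~~ s2.1.2 ->
  s1 != s2 -> s1.1.1 <= s2.1.1 -> fc s1 = fc s2 -> False.
Proof.
case: s1 => [[a1 r1] [c1 t1]]; case: s2 => [[a2 r2] [c2 t2]] /= S1 S2 T1 T2 ne le.
case: r1 T1 S1 ne => // _ S1 ne; case: r2 T2 S2 ne => // _ S2 ne.
have [c1n ac1 _ _] := arrP S1; have [c2n ac2 _ _] := arrP S2.
case: t1 S1 ne => S1 ne; case: t2 S2 ne => S2 ne; rewrite /fc /=.
- case: eqP => v1; case: eqP => v2 e.
  + subst c1 c2; move: le; rewrite leq_eqVlt => /orP[/eqP ea|lt].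
      by subst a2; move: ne; rewrite eqxx.
    exact: Vert S1 S2 lt.
  + lia.
  + lia.
  + by subst a2; exact: BU_same S1 S2 ne.
- case: eqP => v1 e.
  + by have [_ _ + _] := rho_bound S2; rewrite -e; lia.
  + apply: (rho_block S2 S1) => //=.
    by rewrite ltn_neqAle ac1 andbT; apply/eqP.
- case: eqP => v2 e.
  + by have [_ _ + _] := rho_bound S1; rewrite e; lia.
  + apply: (rho_block S1 S2) => //=; first by rewrite eq_sym.
    by rewrite ltn_neqAle ac2 andbT; apply/eqP.
- by move=> e; exact: (rho_inj S1 S2 ne erefl erefl le e).
Qed.

Lemma injW (P : pred (pt * pt)) (f : pt * pt -> nat) :
  (forall s1 s2, s1 \in S -> s2 \in S -> P s1 -> P s2 -> s1 != s2 ->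
     s1.1.1 <= s2.1.1 -> f s1 = f s2 -> False) ->
  {in [seq s <- S | P s] &, injective f}.
Proof.
move=> H s1 s2; rewrite !mem_filter => /andP[P1 S1] /andP[P2 S2] e.
case: (eqVneq s1 s2) => // ne; exfalso.
case: (leqP s1.1.1 s2.1.1) => h; first exact: H S1 S2 P1 P2 ne h e.
by apply: (H s2 s1 S2 S1 P2 P1 _ (ltnW h) (esym e)); rewrite eq_sym.
Qed.

Lemma bound_a : size [seq s <- S | s.2.2] <= n.+1.
Proof.
apply: inj_bound (filter_uniq _ HSuniq) (injW inj_a) _.
case=> [[a r] [c t]]; rewrite mem_filter /= => /andP[T Ss]; rewrite /fa /=.
have [cn ac _ _] := arrP Ss.
case: r Ss => Ss; first by have := src_lt Ss (esym (rt_true Ss)); lia.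
case: t T Ss => // _ Ss.
case hb: hasBig => //; have [_ + _] := mu_bound Ss hb; move=> h; apply: leq_trans h _; lia.
Qed.

Lemma bound_b : size [seq s <- S | s.1.2 || ~~ s.2.2] <= n.
Proof.
apply: inj_bound (filter_uniq _ HSuniq) (injW inj_b) _.
case=> [[a r] [c t]]; rewrite mem_filter /= => /andP[T Ss]; rewrite /fb /=.
have [cn ac _ _] := arrP Ss.
case: r T Ss => /= T Ss; first by have := src_lt Ss (esym (rt_true Ss)); lia.
case: t T Ss => // _ Ss.
have [_ _ + _] := rho_bound Ss; move=> h; apply: leq_trans h _; lia.
Qed.

Lemma bound_c : size [seq s <- S | ~~ s.1.2] <= n.+1.
Proof.
apply: inj_bound (filter_uniq _ HSuniq) (injW inj_c) _.
case=> [[a r] [c t]]; rewrite mem_filter /= => /andP[T Ss]; rewrite /fc /=.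
have [cn ac _ ne] := arrP Ss.
case: t Ss ne => Ss ne.
  case: eqP => // h; lia.
have [_ _ + _] := rho_bound Ss; move=> h; apply: leq_trans h _; lia.
Qed.

Lemma rows_ok : all (fun s : pt * pt => s.1.2 ==> s.2.2) S.
Proof. by apply/allP => s /HSarr[_ /andP[]]. Qed.

Lemma comb_bound : 2 * size S <= 3 * n + 2.
Proof.
have ha : count (fun s : pt * pt => s.2.2) S <= n.+1
  by rewrite -size_filter; exact: bound_a.
have hb : count (fun s : pt * pt => s.1.2 || ~~ s.2.2) S <= n
  by rewrite -size_filter; exact: bound_b.
have hc : count (fun s : pt * pt => ~~ s.1.2) S <= n.+1
  by rewrite -size_filter; exact: bound_c.
have := count3 rows_ok; lia.
Qed.

End CombS.
Section GroupPart.
Variables (gT : finGroupType) (p q n : nat) (g : gT).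
Hypotheses (pp : prime p) (pq : prime q) (pnq : p != q) (og : #[g]%g = (p ^ n * q)%N).

Definition e (x : pt) : {group gT} :=
  <[(g ^+ (p ^ (n - x.1) * (if x.2 then 1 else q))%N)%g]>%G.

Lemma card_e x : x.1 <= n -> #|e x| = p ^ x.1 * (if x.2 then q else 1).
Proof.
move=> xn.
change (#[(g ^+ (p ^ (n - x.1) * (if x.2 then 1 else q))%N)%g]%g = p ^ x.1 * (if x.2 then q else 1)).
set d := p ^ (n - x.1) * _.
have E : #[g]%g = d * (p ^ x.1 * (if x.2 then q else 1)).
  rewrite og /d; have -> : p ^ n = p ^ (n - x.1) * p ^ x.1 by rewrite -expnD subnK.
  by case: x.2; rewrite ?muln1 ?mul1n // -!mulnA; congr (_ * _); rewrite mulnC.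
have dpos : 0 < d by rewrite /d muln_gt0 expn_gt0 (prime_gt0 pp); case: (x.2) => //; exact: prime_gt0.
rewrite orderXdiv; last by rewrite E dvdn_mulr.
by rewrite E mulKn.
Qed.

Lemma e_sub x : (e x : {set gT}) \subset <[g]>%g.
Proof. exact: cycleX. Qed.

Lemma qNdvdp k : ~~ (q %| p ^ k).
Proof.
rewrite Euclid_dvdX // negb_and dvdn_prime2 //; apply/orP; left.
by rewrite eq_sym.
Qed.

Lemma e_le x y : x.1 <= n -> y.1 <= n -> ((e x : {set gT}) \subset e y) = ple x y.
Proof.
move=> xn yn.
rewrite -(cardSg_cyclic (cycle_cyclic g) (e_sub x) (e_sub y)) !card_e // /ple.
have p1 := prime_gt1 pp; have q0 := prime_gt0 pq.
case: x.2; case: y.2 => /=.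
- by rewrite dvdn_pmul2r // dvdn_Pexp2l // andbT.
- rewrite andbF muln1; apply/negP => /(dvdn_trans (dvdn_mull _ (dvdnn q))).
  by move/negP: (qNdvdp y.1).
- rewrite muln1 Gauss_dvdl ?dvdn_Pexp2l ?andbT //.
  by apply: coprimeXl; rewrite prime_coprime // dvdn_prime2.
- by rewrite !muln1 dvdn_Pexp2l // andbT.
Qed.

Lemma e_inj x y : x.1 <= n -> y.1 <= n -> (e x : {set gT}) = e y -> x = y.
Proof.
move=> xn yn E.
have := e_le xn yn; have := e_le yn xn; rewrite E subxx /ple.
case: x y {E xn yn} => [a r] [b t] /= /esym/andP[ba tr] /esym/andP[ab rt].
have -> : a = b by apply/eqP; rewrite eqn_leq ab ba.
by case: r t tr rt => [] [].
Qed.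

Lemma arith d : d %| p ^ n * q -> exists k (r : bool), k <= n /\ d = p ^ k * (if r then q else 1).
Proof.
move=> dd.
case qd: (q %| d).
  case/dvdnP: qd => d' Ed; subst d.
  move: dd; rewrite dvdn_pmul2r ?prime_gt0 // => /(dvdn_pfactor _ _ pp)[k kn ->].
  by exists k, true.
have cq : coprime d q by rewrite coprime_sym prime_coprime // qd.
move: dd; rewrite Gauss_dvdl // => /(dvdn_pfactor _ _ pp)[k kn ->].
by exists k, false; rewrite muln1.
Qed.

Lemma E1 (H : {set gT}) : group_set H -> H \subset <[g]>%g ->
  exists x : pt, x.1 <= n /\ H = e x.
Proof.
move=> gH sHG.
have sHG' : (group gH : {set gT}) \subset <[g]>%g by [].
have dv : #|H| %| #[g]%g := cardSg sHG'.
move: dv; rewrite og => /arith[k [r [kn Ed]]].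
exists (k, r); split=> //.
apply/eqP; rewrite -[H]/(gval (group gH)).
rewrite (eq_subG_cyclic (cycle_cyclic g) sHG' (e_sub (k, r))).
have -> : #|e (k, r)| = p ^ k * (if r then q else 1) by exact: card_e.
by rewrite -Ed.
Qed.

Lemma e_meet x z : x.1 <= n -> z.1 <= n ->
  (e x : {set gT}) :&: e z = e (pmeet x z).
Proof.
move=> xn zn.
have mn : (pmeet x z).1 <= n by rewrite /pmeet /=; exact: leq_trans (geq_minl _ _) xn.
apply/eqP; rewrite eqEsubset; apply/andP; split.
  have gI : group_set ((e x : {set gT}) :&: e z) by exact: group_setI.
  have sI : (e x : {set gT}) :&: e z \subset <[g]>%g by apply: subIset; rewrite e_sub.
  have [w [wn Ew]] := E1 gI sI.
  rewrite Ew e_le //.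
  have := subsetIl (e x : {set gT}) (e z); have := subsetIr (e x : {set gT}) (e z).
  rewrite Ew !e_le // /ple /pmeet /= => /andP[wz1 wz2] /andP[wx1 wx2].
  by rewrite leq_min wz1 wx1 /=; case: w.2 wz2 wx2 {Ew} => //= -> ->.
rewrite subsetI !e_le // /ple /pmeet /= geq_minl geq_minr.
by case: x.2; case: z.2.
Qed.

End GroupPart.
Unset Implicit Arguments.

Lemma seq_choice (A : eqType) (B : Type) (b0 : B) (s : seq A) (P : A -> B -> Prop) :
  (forall a, a \in s -> exists b, P a b) ->
  exists f : A -> B, forall a, a \in s -> P a (f a).
Proof.
elim: s => [|x s IH] H; first by exists (fun _ => b0).
have [f Hf] : exists f : A -> B, forall a, a \in s -> P a (f a).
  by apply: IH => a sa; apply: H; rewrite inE sa orbT.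
have [b Hb] := H x (mem_head _ _).
exists (fun a => if a == x then b else f a) => a; rewrite inE.
by case: eqP => [-> //|_] /= /Hf.
Qed.

Lemma mem_pts n (x : pt) :
  (x \in [seq (v, r) | v <- iota 0 n.+1, r <- [:: false; true]]) = (x.1 <= n).
Proof.
case: x => v r; apply/allpairsP/idP => [[[v' r'] [hv hr [-> _]]]|hv].
  by move: hv; rewrite mem_iota.
exists (v, r); split; [rewrite mem_iota /= | by case: (r) | by []].
by rewrite add0n ltnS.
Qed.

Theorem corollary6p4 (gT : finGroupType) (G : {group gT}) (p q n : nat)
  (S T : {set (({set gT} * {set gT})%type)}) :
  prime p -> prime q -> p != q -> 1 <= n ->
  cyclic G -> #|G| = (p ^ n * q)%N ->
  minimal_generating_set G S T ->
  forall k : nat,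
    (n = (2 * k)%N -> #|S| <= 3 * k + 1) /\
    (n = (2 * k + 1)%N -> #|S| <= 3 * k + 2).
Proof.
move=> pp pq pnq n1 cycG cardG [HS [tsT ST minT] Hmin] k.
suff: 2 * #|S| <= 3 * n + 2 by move=> h; split=> E; subst n; lia.
case/cyclicP: cycG => g defG.
have og : #[g]%g = (p ^ n * q)%N by rewrite -cardG defG.
pose E := @e gT p q n g.
pose f := fun xy : pt * pt => ((E xy.1 : {set gT}), (E xy.2 : {set gT})).
pose pts := [seq (v, r) | v <- iota 0 n.+1, r <- [:: false; true]].
pose Sp := undup [seq xy <- [seq (x, y) | x <- pts, y <- pts] | f xy \in S].
have memSp : forall xy, (xy \in Sp) = ((xy.1.1 <= n) && (xy.2.1 <= n)) && (f xy \in S).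
  case=> x y; rewrite mem_undup mem_filter andbC.
  congr (_ && _); apply/allpairsP/idP => [[[x' y'] /= [hx hy [-> ->]]]|/andP[hx hy]].
    by rewrite -!(mem_pts n) hx hy.
  by exists (x, y); rewrite /= !mem_pts.
have finj : {in Sp &, injective f}.
  move=> [x1 y1] [x2 y2]; rewrite !memSp /= => /andP[/andP[h1 h2] _] /andP[/andP[h3 h4] _] [e1 e2].
  by rewrite (e_inj pp pq pnq og h1 h3 e1) (e_inj pp pq pnq og h2 h4 e2).
have subG : forall x : pt, (E x : {set gT}) \subset G.
  by move=> x; rewrite defG; exact: e_sub.
have cardS : #|S| = size Sp.
  have U : uniq (map f Sp) by rewrite (map_inj_in_uniq finj) undup_uniq.
  rewrite -(size_map f); move/card_uniqP: U => <-.
  apply: eq_card => a; apply/idP/idP; last first.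
    move=> /mapP[xy xySp ->]; by move: xySp; rewrite memSp => /andP[].
  move=> aS; have /andP[/and3P[/andP[g1 s1] /andP[g2 s2] s12] _] := HS a aS.
  rewrite defG in s1 s2.
  have [x [xn Ex]] := E1 pp pq og g1 s1.
  have [y [yn Ey]] := E1 pp pq og g2 s2.
  apply/mapP; exists (x, y); first by rewrite memSp /= xn yn /f /= -/E -Ex -Ey -surjective_pairing.
  by rewrite /f /= -Ex -Ey -surjective_pairing.
have ex : forall s, s \in Sp -> exists T' : {set ({set gT} * {set gT})},
    [/\ transfer_system G T', S :\ f s \subset T' & f s \notin T'].
  move=> s; rewrite memSp => /andP[_ fS].
  apply: NNPP => Hn; apply: (Hmin _ fS); split => //.
    exact: subset_trans (subD1set S (f s)) ST.
  move=> T' tsT' sub; apply: (minT T' tsT').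
  apply/subsetP => b bS; case: (eqVneq b (f s)) => [->|ne].
    case: (boolP (f s \in T')) => // nin.
    by exfalso; apply: Hn; exists T'; apply: And3.
  by apply: (subsetP sub); rewrite !inE ne bS.
have [Tf HTf] := @seq_choice _ _ set0 _ _ ex.
pose R := fun (s : pt * pt) (x y : pt) => [&& x.1 <= n, y.1 <= n & f (x, y) \in Tf s].
have sg : forall x : pt, subgrp G (E x : {set gT}) by move=> x; rewrite /subgrp groupP subG.
have HSarr : forall s, s \in Sp -> [/\ s.2.1 <= n, ple s.1 s.2 & s.1 != s.2].
  case=> x y; rewrite memSp /= => /andP[/andP[xn yn] fS]; split => //.
    have /andP[/and3P[_ _ /= s12] _] := HS _ fS.
    by rewrite -(e_le pp pq pnq og xn yn).
  have /andP[_ /= ni] := HS _ fS.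
  by apply: contra ni => /eqP ->; rewrite /is_identity /=.
have HRid : forall s (x : pt), s \in Sp -> x.1 <= n -> R s x x.
  move=> s x sSp xn; have [[_ Hid _ _ _] _ _] := HTf s sSp.
  by rewrite /R xn; exact: Hid.
have HRcomp : forall s (x y z : pt), s \in Sp -> R s x y -> R s y z -> R s x z.
  move=> s x y z sSp; have [[_ _ Hc _ _] _ _] := HTf s sSp.
  rewrite /R => /and3P[xn yn h1] /and3P[_ zn h2]; rewrite xn zn /=.
  exact: Hc h1 h2.
have HRres : forall s (x y : pt) (z : pt), s \in Sp -> R s x y -> z.1 <= n -> ple z y ->
    R s (pmeet x z) z.
  move=> s x y z sSp; have [[_ _ _ _ Hr] _ _] := HTf s sSp.
  rewrite /R => /and3P[xn yn h] zn zy.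
  have mn : (pmeet x z).1 <= n by rewrite /pmeet /=; exact: leq_trans (geq_minl _ _) xn.
  rewrite mn zn /=.
  have := Hr _ _ _ h (sg z); rewrite /f /= -(e_meet pp pq pnq og xn zn); apply.
  by rewrite (e_le pp pq pnq og zn yn).
have HRS : forall s t, s \in Sp -> t \in Sp -> t != s -> R s t.1 t.2.
  move=> s t sSp tSp ne; have [_ sub _] := HTf s sSp.
  move: (tSp); rewrite memSp => /andP[/andP[t1 t2] fS].
  rewrite /R t1 t2 /= -surjective_pairing; apply: (subsetP sub).
  rewrite !inE fS andbT; apply: contra ne => /eqP e.
  by apply/eqP; apply: finj.
have HRn : forall s, s \in Sp -> ~~ R s s.1 s.2.
  move=> s sSp; have [_ _ nin] := HTf s sSp.
  by rewrite /R -surjective_pairing (negPf nin) !andbF.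
have := comb_bound (undup_uniq _) HSarr HRid HRcomp HRres HRS HRn.
by rewrite -cardS.
Qed.
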